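(* Let $k\ge 2$ be an integer, $0<\bar r\le k$ a residue, and $\mathcal{A}$ the alphabet of all positive integers congruent to $\bar r \pmod k$. Suppose that for every residue $r \pmod k$ there exists a matrix $\begin{pmatrix}a&b\\c&d\end{pmatrix}\in\mathcal{G}_{\mathcal{A}}$ with $\gcd(c,k)=1$ and $d\equiv r\pmod k$. Then for every $n\ge1$ we have $\mathfrak{D}_{\mathcal{A}}\bmod k^n=\mathbb{Z}/k^n\mathbb{Z}$.
   Context: For $a\in\mathbb{N}$ let $\gamma_a=\begin{pmatrix}0&1\\1&a\end{pmatrix}$ and let $\mathcal{G}_{\mathcal{A}}$ be the semigroup generated by $\gamma_a$, $a\in\mathcal{A}$. $\mathfrak{D}_{\mathcal{A}}=\{\langle \gamma e_2,e_2\rangle:\gamma\in\mathcal{G}_{\mathcal{A}}\}$ is the set of lower-right entries of elements of $\mathcal{G}_{\mathcal{A}}$. *)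

(* Defs.v *)
From HB Require Import structures.
From mathcomp Require Import all_boot all_order all_algebra.
Set Implicit Arguments. Unset Strict Implicit. Unset Printing Implicit Defensive.
Import Order.TTheory GRing.Theory Num.Theory.
Local Open Scope ring_scope.

Definition i0 : 'I_2 := @Ordinal 2 0 isT.
Definition i1 : 'I_2 := @Ordinal 2 1 isT.

Definition gamma (a : nat) : 'M[int]_2 :=
  \matrix_(i < 2, j < 2)
    (if (nat_of_ord i == 0%N) && (nat_of_ord j == 0%N) then 0
     else if (nat_of_ord i == 1%N) && (nat_of_ord j == 1%N) then (a%:Z)
     else 1).

Inductive inG (A : pred nat) : 'M[int]_2 -> Prop :=
| inG_gen a : A a -> inG A (gamma a)
| inG_mul M N : inG A M -> inG A N -> inG A (M *m N).

(* D_A : lower-right entries <gamma e2, e2> of elements of G_A *)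
Definition inD (A : pred nat) (d : int) : Prop :=
  exists2 M, inG A M & M i1 i1 = d.

Definition alphabet (k rbar : nat) : pred nat :=
  fun a => (0 < a)%N && (a %% k == rbar %% k)%N.

(* Main.v *)
Require Import Defs.
From mathcomp Require Import all_boot all_order all_algebra.
From mathcomp Require Import ring.
Import GRing.Theory Num.Theory.
Local Open Scope ring_scope.

Lemma pert (k rbar : nat) (M : 'M[int]_2) : inG (alphabet k rbar) M ->
  forall t : nat, inG (alphabet k rbar)
     (M + ((k * t)%N%:Z) *: (M *m delta_mx i0 i1)).
Proof.
elim=> [a Ha|P N HP IP HN IN] t.
  have -> : gamma a + (k * t)%N%:Z *: (gamma a *m delta_mx i0 i1)
            = gamma (a + k * t).
    apply/matrixP => i j; rewrite !mxE !big_ord_recl !big_ord0 !mxE.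
    by case: i => [[|[|?]] ?]; case: j => [[|[|?]] ?] //=;
       rewrite ?mulr0 ?mul0r ?addr0 ?mulr1 ?add0r //= PoszD.
  apply: inG_gen; move: Ha; rewrite /alphabet => /andP [Ha1 Ha2].
  apply/andP; split; first by rewrite addn_gt0 Ha1.
  by rewrite addnC mulnC modnMDl.
have -> : P *m N + (k * t)%N%:Z *: ((P *m N) *m delta_mx i0 i1)
   = P *m (N + (k * t)%N%:Z *: (N *m delta_mx i0 i1)).
  by rewrite mulmxDr -scalemxAr mulmxA.
exact: (inG_mul HP (IN t)).
Qed.

Lemma pert_entry (M : 'M[int]_2) (c : int) :
  (M + c *: (M *m delta_mx i0 i1)) i1 i1 = M i1 i1 + c * M i1 i0.
Proof.
rewrite !mxE !big_ord_recl !big_ord0 !mxE /= mulr1 mulr0 !addr0.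
by congr (_ + _ * M i1 _); apply: val_inj.
Qed.

Theorem lemmaB9 (k rbar : nat) (hk : (2 <= k)%N)
  (hr : (0 < rbar <= k)%N)
  (H : forall r : int, exists2 M : 'M[int]_2,
         inG (alphabet k rbar) M &
         gcdz (M i1 i0) k%:Z = 1%N /\ (M i1 i1 = r %[mod k%:Z])%Z) :
  forall n : nat, (1 <= n)%N ->
    forall x : int, exists2 d : int,
      inD (alphabet k rbar) d & (d = x %[mod (k ^ n)%:Z])%Z.
Proof.
move=> n hn x.
have [M HM [Hg Hx]] := H x.
set c := M i1 i0.
set m : int := (k ^ n.-1)%N%:Z.
have kpos : (0 < k)%N by apply: leq_trans hk.
have mnz : m != 0 by rewrite /m eqz_nat -lt0n expn_gt0 kpos.
have cop : coprimez c m.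
  have -> : m = (k%:Z) ^+ n.-1.
    by rewrite /m; elim: n.-1 => [|j IH] //; rewrite expnS exprS PoszM IH.
  apply: coprimezXr; rewrite /coprimez.
  exact/eqP.
have [[u v] /= Huv] := coprimezP _ _ cop.
have : (k%:Z %| x - M i1 i1)%Z by rewrite -eqz_mod_dvd eq_sym; apply/eqP.
move=> /dvdzP [s Hs].
set q := ((s * u) %/ m)%Z.
set t := absz ((s * u) %% m)%Z.
have ht : t%:Z = s * u - q * m.
  rewrite /t gez0_abs; last exact: modz_ge0.
  by rewrite {2}(divz_eq (s * u) m) /q; ring.
exists (M i1 i1 + (k * t)%N%:Z * c).
  exists (M + ((k * t)%N%:Z) *: (M *m delta_mx i0 i1)); first exact: pert.
  by rewrite pert_entry.
apply/eqP; rewrite eqz_mod_dvd.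
have -> : (k ^ n)%N%:Z = k%:Z * m by rewrite /m -PoszM -expnS prednK.
have -> : M i1 i1 + (k * t)%N%:Z * c - x = k%:Z * (t%:Z * c - s).
  have -> : M i1 i1 = x - s * k%:Z by rewrite -Hs; ring.
  rewrite PoszM; ring.
rewrite dvdz_mul2l; last by rewrite eqz_nat -lt0n.
apply/dvdzP; exists (-(s * v) - q * c).
rewrite ht.
have -> : (s * u - q * m) * c - s = s * (u * c - 1) - q * m * c by ring.
have -> : u * c - 1 = - (v * m) by rewrite -Huv; ring.
ring.
Qed.
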